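(* Let $\mathbb{T}^2=\mathbb{R}^2/\mathbb{Z}^2$ with coordinates $(x,y)$, let $a>0$, and equip $\mathrm{Diff}(\mathbb{T}^2)$ with the right-invariant metric given at the identity by $\langle\!\langle u,v\rangle\!\rangle=a\int_{\mathbb{T}^2}\langle u,v\rangle\,dx\,dy$. Write $S(u,v)=\langle\!\langle R(u,v)v,u\rangle\!\rangle$. Then for any $u=f(x)\frac{\partial}{\partial x}$ and $v=g(x)\frac{\partial}{\partial x}$ with $f,g$ smooth and $1$-periodic, $$S(u,v)=a\int_{\mathbb{T}^2}(f g_x-g f_x)^2\,dx\,dy\ \ge 0 .$$ On the other hand, if $u=\sin(2\pi x)\frac{\partial}{\partial x}$ and $v=\sin^2(2\pi x)\frac{\partial}{\partial y}$, then $S(u,v)<0$.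
   Context: $R$ is the curvature tensor of the Levi-Civita connection of the right-invariant metric at the identity. *)

(* Defs.v *)
From Stdlib Require Import Reals.
From Coquelicot Require Import Coquelicot.
Open Scope R_scope.

CoInductive smooth1 (f : R -> R) : Prop :=
  smooth1_intro :
    (forall x, ex_derive f x) -> smooth1 (Derive f) -> smooth1 f.

Definition dx (f : R -> R -> R) : R -> R -> R :=
  fun x y => Derive (fun t => f t y) x.
Definition dy (f : R -> R -> R) : R -> R -> R :=
  fun x y => Derive (fun t => f x t) y.

CoInductive smooth2 (f : R -> R -> R) : Prop :=
  smooth2_intro :
    (forall x y, continuous (fun p : R * R => f (fst p) (snd p)) (x, y)) ->
    (forall x y, ex_derive (fun t => f t y) x) ->
    (forall x y, ex_derive (fun t => f x t) y) ->
    smooth2 (dx f) -> smooth2 (dy f) -> smooth2 f.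

(* Functions on T^2 = R^2/Z^2: Z^2-periodic functions on R^2. *)
Definition periodic2 (f : R -> R -> R) : Prop :=
  forall x y, f (x + 1) y = f x y /\ f x (y + 1) = f x y.

(* Vector fields on T^2: pairs (first component = d/dx coefficient,
   second component = d/dy coefficient). *)
Definition VF := ((R -> R -> R) * (R -> R -> R))%type.

Definition smooth_vf (u : VF) : Prop :=
  smooth2 (fst u) /\ smooth2 (snd u) /\ periodic2 (fst u) /\ periodic2 (snd u).

Definition vf_add (u v : VF) : VF :=
  (fun x y => fst u x y + fst v x y, fun x y => snd u x y + snd v x y).
Definition vf_opp (u : VF) : VF :=
  (fun x y => - fst u x y, fun x y => - snd u x y).
Definition vf_sub (u v : VF) : VF := vf_add u (vf_opp v).

Definition vf_apply (u : VF) (h : R -> R -> R) : R -> R -> R :=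
  fun x y => fst u x y * dx h x y + snd u x y * dy h x y.

Definition vf_bracket (u v : VF) : VF :=
  (fun x y => vf_apply u (fst v) x y - vf_apply v (fst u) x y,
   fun x y => vf_apply u (snd v) x y - vf_apply v (snd u) x y).

(* Lie algebra bracket of Diff(T^2) for right-invariant fields:
   ad_u v = - [u,v] (the resulting curvature does not depend on this sign). *)
Definition lie (u v : VF) : VF := vf_opp (vf_bracket u v).

Definition int_T2 (h : R -> R -> R) : R :=
  RInt (fun x => RInt (fun y => h x y) 0 1) 0 1.

Definition ip (a : R) (u v : VF) : R :=
  a * int_T2 (fun x y => fst u x y * fst v x y + snd u x y * snd v x y).

(* N is the Levi-Civita connection of the right-invariant metric, restricted
   to right-invariant vector fields and evaluated at the identity
   (N u v = (nabla_U V)(id) for the right-invariant extensions U, V):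
   it maps smooth fields to smooth fields and satisfies the Koszul formula
   2 <<N u v, w>> = <<[u,v],w>> - <<[v,w],u>> + <<[w,u],v>>
   for all smooth w (this determines N uniquely). *)
Definition LC_connection (a : R) (N : VF -> VF -> VF) : Prop :=
  forall u v, smooth_vf u -> smooth_vf v ->
    smooth_vf (N u v) /\
    forall w, smooth_vf w ->
      2 * ip a (N u v) w =
        ip a (lie u v) w - ip a (lie v w) u + ip a (lie w u) v.

Definition curv (N : VF -> VF -> VF) (u v w : VF) : VF :=
  vf_sub (vf_sub (N u (N v w)) (N v (N u w))) (N (lie u v) w).

Definition S (a : R) (N : VF -> VF -> VF) (u v : VF) : R :=
  ip a (curv N u v v) u.

Definition along_x (f : R -> R) : VF := (fun x _ => f x, fun _ _ => 0).
Definition along_y (g : R -> R) : VF := (fun _ _ => 0, fun x _ => g x).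

(* Main.v *)
Require Import Defs.
From Stdlib Require Import Reals Lra FunctionalExtensionality.
From Coquelicot Require Import Coquelicot.
Open Scope R_scope.

Lemma cont_2d (f : R -> R -> R) x y :
  continuous (fun p : R * R => f (fst p) (snd p)) (x, y) -> continuity_2d_pt f x y.
Proof.
  intros H eps.
  apply filterlim_locally with (eps := eps) in H.
  destruct H as [d Hd].
  exists d. intros u v Hu Hv.
  specialize (Hd (u, v)). simpl in Hd.
  apply Hd. split; simpl; assumption.
Qed.

Lemma cont_y (f : R -> R -> R) x y :
  continuous (fun p : R * R => f (fst p) (snd p)) (x, y) -> continuous (fun t => f x t) y.
Proof.
  intros H.
  apply (continuous_comp_2 (fun _ : R => x) (fun t => t) f y).
  - apply continuous_const.
  - apply continuous_id.
  - exact H.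
Qed.

Lemma cont_x (f : R -> R -> R) x y :
  continuous (fun p : R * R => f (fst p) (snd p)) (x, y) -> continuous (fun t => f t y) x.
Proof.
  intros H.
  apply (continuous_comp_2 (fun t : R => t) (fun _ : R => y) f x).
  - apply continuous_id.
  - apply continuous_const.
  - exact H.
Qed.

Inductive CS : (R -> R -> R) -> Prop :=
| CSbase f : smooth2 f -> CS f
| CSconst c : CS (fun _ _ => c)
| CSplus f g : CS f -> CS g -> CS (fun x y => f x y + g x y)
| CSminus f g : CS f -> CS g -> CS (fun x y => f x y - g x y)
| CSmult f g : CS f -> CS g -> CS (fun x y => f x y * g x y)
| CSopp f : CS f -> CS (fun x y => - f x y).

Lemma C_cont f : CS f -> forall x y, continuous (fun p : R * R => f (fst p) (snd p)) (x, y).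
Proof.
  induction 1; intros x y.
  - destruct H; auto.
  - apply continuous_const.
  - apply (continuous_plus (fun p : R*R => f (fst p) (snd p)) (fun p : R*R => g (fst p) (snd p))); auto.
  - apply (continuous_plus (fun p : R*R => f (fst p) (snd p)) (fun p : R*R => - g (fst p) (snd p))); auto.
    apply (continuous_opp (fun p : R*R => g (fst p) (snd p))); auto.
  - apply (continuous_mult (fun p : R*R => f (fst p) (snd p)) (fun p : R*R => g (fst p) (snd p))); auto.
  - apply (continuous_opp (fun p : R*R => f (fst p) (snd p))); auto.
Qed.

Lemma C_exdx f : CS f -> forall x y, ex_derive (fun t => f t y) x.
Proof.
  induction 1; intros x y.
  - destruct H; auto.
  - apply ex_derive_const.
  - apply (ex_derive_plus (fun t => f t y) (fun t => g t y)); auto.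
  - apply (ex_derive_minus (fun t => f t y) (fun t => g t y)); auto.
  - apply (ex_derive_mult (fun t => f t y) (fun t => g t y)); auto.
  - apply (ex_derive_opp (fun t => f t y)); auto.
Qed.

Lemma C_exdy f : CS f -> forall x y, ex_derive (fun t => f x t) y.
Proof.
  induction 1; intros x y.
  - destruct H; auto.
  - apply ex_derive_const.
  - apply (ex_derive_plus (fun t => f x t) (fun t => g x t)); auto.
  - apply (ex_derive_minus (fun t => f x t) (fun t => g x t)); auto.
  - apply (ex_derive_mult (fun t => f x t) (fun t => g x t)); auto.
  - apply (ex_derive_opp (fun t => f x t)); auto.
Qed.

Lemma C_dx f : CS f -> CS (dx f).
Proof.
  induction 1.
  - destruct H. apply CSbase; auto.
  - replace (dx (fun _ _ => c)) with (fun _ _ : R => 0). apply CSconst.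
    unfold dx. extensionality x; extensionality y. now rewrite Derive_const.
  - replace (dx (fun x y => f x y + g x y)) with (fun x y => dx f x y + dx g x y).
    now apply CSplus.
    unfold dx. extensionality x; extensionality y. rewrite Derive_plus; auto using C_exdx.
  - replace (dx (fun x y => f x y - g x y)) with (fun x y => dx f x y - dx g x y).
    now apply CSminus.
    unfold dx. extensionality x; extensionality y. rewrite Derive_minus; auto using C_exdx.
  - replace (dx (fun x y => f x y * g x y)) with (fun x y => dx f x y * g x y + f x y * dx g x y).
    apply CSplus; apply CSmult; auto.
    unfold dx. extensionality x; extensionality y. rewrite Derive_mult; auto using C_exdx.
  - replace (dx (fun x y => - f x y)) with (fun x y => - dx f x y).
    now apply CSopp.
    unfold dx. extensionality x; extensionality y. now rewrite Derive_opp.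
Qed.

Lemma C_dy f : CS f -> CS (dy f).
Proof.
  induction 1.
  - destruct H. apply CSbase; auto.
  - replace (dy (fun _ _ => c)) with (fun _ _ : R => 0). apply CSconst.
    unfold dy. extensionality x; extensionality y. now rewrite Derive_const.
  - replace (dy (fun x y => f x y + g x y)) with (fun x y => dy f x y + dy g x y).
    now apply CSplus.
    unfold dy. extensionality x; extensionality y. rewrite Derive_plus; auto using C_exdy.
  - replace (dy (fun x y => f x y - g x y)) with (fun x y => dy f x y - dy g x y).
    now apply CSminus.
    unfold dy. extensionality x; extensionality y. rewrite Derive_minus; auto using C_exdy.
  - replace (dy (fun x y => f x y * g x y)) with (fun x y => dy f x y * g x y + f x y * dy g x y).
    apply CSplus; apply CSmult; auto.
    unfold dy. extensionality x; extensionality y. rewrite Derive_mult; auto using C_exdy.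
  - replace (dy (fun x y => - f x y)) with (fun x y => - dy f x y).
    now apply CSopp.
    unfold dy. extensionality x; extensionality y. now rewrite Derive_opp.
Qed.

Lemma C_smooth : forall f, CS f -> smooth2 f.
Proof.
  cofix CIH. intros f H. constructor.
  - apply C_cont; auto.
  - apply C_exdx; auto.
  - apply C_exdy; auto.
  - apply CIH. apply C_dx; auto.
  - apply CIH. apply C_dy; auto.
Qed.

Lemma F_derive h : CS h -> forall x,
  is_derive (fun x => RInt (fun y => h x y) 0 1) x (RInt (fun y => dx h x y) 0 1).
Proof.
  intros Hh x.
  apply (is_derive_RInt_param h 0 1 x).
  - apply filter_forall. intros x0 t _. apply C_exdx; auto.
  - intros t _. apply (cont_2d (dx h)). apply C_cont. apply C_dx; auto.
  - apply filter_forall. intros x0. apply (ex_RInt_continuous (V := R_CompleteNormedModule)). intros z _.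
    apply (cont_y h). apply C_cont; auto.
Qed.

Lemma ex_inner h x : CS h -> ex_RInt (fun y => h x y) 0 1.
Proof.
  intros Hh. apply (ex_RInt_continuous (V := R_CompleteNormedModule)). intros z _. apply (cont_y h). apply C_cont; auto.
Qed.

Lemma cont_outer h x : CS h -> continuous (fun x => RInt (fun y => h x y) 0 1) x.
Proof.
  intros Hh.
  apply (ex_derive_continuous (K := R_AbsRing) (V := R_NormedModule) (fun x => RInt (fun y => h x y) 0 1)).
  eexists. apply F_derive; auto.
Qed.

Lemma ex_outer h : CS h -> ex_RInt (fun x => RInt (fun y => h x y) 0 1) 0 1.
Proof.
  intros Hh. apply (ex_RInt_continuous (V := R_CompleteNormedModule)). intros z _. apply cont_outer; auto.
Qed.

Lemma int_plus h1 h2 : CS h1 -> CS h2 ->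
  int_T2 (fun x y => h1 x y + h2 x y) = int_T2 h1 + int_T2 h2.
Proof.
  intros H1 H2. unfold int_T2.
  rewrite (RInt_ext _ (fun x => RInt (fun y => h1 x y) 0 1 + RInt (fun y => h2 x y) 0 1)).
  - apply (RInt_plus (V := R_CompleteNormedModule)); apply ex_outer; auto.
  - intros x _. apply (RInt_plus (V := R_CompleteNormedModule)); apply ex_inner; auto.
Qed.

Lemma int_scal c h : CS h -> int_T2 (fun x y => c * h x y) = c * int_T2 h.
Proof.
  intros H1. unfold int_T2.
  rewrite (RInt_ext _ (fun x => c * RInt (fun y => h x y) 0 1)).
  - apply (RInt_scal (V := R_CompleteNormedModule)); apply ex_outer; auto.
  - intros x _. apply (RInt_scal (V := R_CompleteNormedModule)); apply ex_inner; auto.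
Qed.

Lemma int_ext h1 h2 : (forall x y, h1 x y = h2 x y) -> int_T2 h1 = int_T2 h2.
Proof.
  intros H. f_equal. extensionality x; extensionality y. auto.
Qed.

Lemma int_minus h1 h2 : CS h1 -> CS h2 ->
  int_T2 (fun x y => h1 x y - h2 x y) = int_T2 h1 - int_T2 h2.
Proof.
  intros H1 H2.
  rewrite (int_ext _ (fun x y => h1 x y + (-1) * h2 x y)) by (intros; ring).
  rewrite int_plus, int_scal; auto. ring.
  apply CSmult; auto. apply CSconst.
Qed.

Lemma int_dy0 P : CS P -> periodic2 P -> int_T2 (dy P) = 0.
Proof.
  intros HC Hp. unfold int_T2.
  rewrite (RInt_ext _ (fun _ => 0)).
  - rewrite RInt_const. simpl. unfold scal; simpl; unfold mult; simpl. ring.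
  - intros x _. unfold dy.
    rewrite (RInt_Derive (fun t => P x t)).
    + destruct (Hp x 0) as [_ H]. rewrite Rplus_0_l in H. rewrite H. change (P x 0 - P x 0 = 0)%R. ring.
    + intros; apply C_exdy; auto.
    + intros z _. apply (cont_y (dy P)). apply C_cont. apply C_dy; auto.
Qed.

Lemma int_dx0 P : CS P -> periodic2 P -> int_T2 (dx P) = 0.
Proof.
  intros HC Hp. unfold int_T2.
  rewrite (RInt_ext _ (Derive (fun x => RInt (fun y => P x y) 0 1))).
  - rewrite RInt_Derive.
    + rewrite (RInt_ext (fun y => P 1 y) (fun y => P 0 y)). ring.
      intros y _. destruct (Hp 0 y) as [H _]. rewrite Rplus_0_l in H. exact H.
    + intros x _. eexists. apply F_derive; auto.
    + intros x _.
      apply (continuous_ext (fun x => RInt (fun y => dx P x y) 0 1)).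
      * intros t. symmetry. apply is_derive_unique. apply F_derive; auto.
      * apply cont_outer. apply C_dx; auto.
  - intros x _. symmetry. apply is_derive_unique. apply F_derive; auto.
Qed.

Ltac solveC := repeat (first [assumption | (apply CSbase; assumption) | apply CSplus | apply CSminus | apply CSmult | apply CSopp | apply CSconst
   | apply C_dx | apply C_dy]).
Ltac atomd := repeat match goal with
  | |- _ /\ _ => split
  | |- True => exact I
  | |- ex_derive (fun t => _ t ?y) ?x => apply C_exdx; solveC
  | |- ex_derive (fun t => _ ?x t) ?y => apply C_exdy; solveC
  end.

Lemma Derive_shift (g : R -> R) x c : Derive g (x + c) = Derive (fun t => g (t + c)) x.
Proof.
  unfold Derive. f_equal. apply Lim_ext. intros h.
  replace (x + h + c) with (x + c + h) by ring. reflexivity.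
Qed.

Lemma per_dx f : periodic2 f -> periodic2 (dx f).
Proof.
  intros H x y. unfold dx. split.
  - rewrite Derive_shift. f_equal. extensionality t. apply H.
  - f_equal. extensionality t. apply H.
Qed.

Lemma per_dy f : periodic2 f -> periodic2 (dy f).
Proof.
  intros H x y. unfold dy. split.
  - f_equal. extensionality t. apply H.
  - rewrite Derive_shift. f_equal. extensionality t. apply H.
Qed.

Inductive PC : (R -> R -> R) -> Prop :=
| PCbase f : periodic2 f -> PC f
| PCconst c : PC (fun _ _ => c)
| PCplus f g : PC f -> PC g -> PC (fun x y => f x y + g x y)
| PCminus f g : PC f -> PC g -> PC (fun x y => f x y - g x y)
| PCmult f g : PC f -> PC g -> PC (fun x y => f x y * g x y)
| PCopp f : PC f -> PC (fun x y => - f x y)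
| PCdx f : PC f -> PC (dx f)
| PCdy f : PC f -> PC (dy f).

Lemma PC_per f : PC f -> periodic2 f.
Proof.
  induction 1; intros x y; cbv beta.
  - apply H.
  - auto.
  - destruct (IHPC1 x y) as [a1 a2], (IHPC2 x y) as [b1 b2]. rewrite a1, a2, b1, b2; auto.
  - destruct (IHPC1 x y) as [a1 a2], (IHPC2 x y) as [b1 b2]. rewrite a1, a2, b1, b2; auto.
  - destruct (IHPC1 x y) as [a1 a2], (IHPC2 x y) as [b1 b2]. rewrite a1, a2, b1, b2; auto.
  - destruct (IHPC x y) as [a1 a2]. rewrite a1, a2; auto.
  - apply per_dx; auto.
  - apply per_dy; auto.
Qed.

Ltac solvePC := repeat (first [(apply PCbase; assumption) | apply PCplus | apply PCminus | apply PCmult | apply PCopp | apply PCconst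
   | apply PCdx | apply PCdy]).

Definition adstar (u v : VF) : VF :=
 (fun x y => fst v x y * dx (fst u) x y + snd v x y * dx (snd u) x y
     + fst u x y * dx (fst v) x y + snd u x y * dy (fst v) x y
     + fst v x y * (dx (fst u) x y + dy (snd u) x y),
  fun x y => fst v x y * dy (fst u) x y + snd v x y * dy (snd u) x y
     + fst u x y * dx (snd v) x y + snd u x y * dy (snd v) x y
     + snd v x y * (dx (fst u) x y + dy (snd u) x y)).

Definition NLC (u v : VF) : VF :=
 (fun x y => / 2 * (fst (lie u v) x y - fst (adstar v u) x y - fst (adstar u v) x y),
  fun x y => / 2 * (snd (lie u v) x y - snd (adstar v u) x y - snd (adstar u v) x y)).

Definition ipf (u v : VF) : R -> R -> R :=
  fun x y => fst u x y * fst v x y + snd u x y * snd v x y.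

Ltac unf := unfold ipf, NLC, adstar, lie, vf_opp, vf_bracket, vf_apply; simpl.

Lemma NLC_smooth u v : smooth_vf u -> smooth_vf v -> smooth_vf (NLC u v).
Proof.
  intros [u1 [u2 [u3 u4]]] [v1 [v2 [v3 v4]]].
  split; [|split; [|split]].
  - apply C_smooth. unf. solveC.
  - apply C_smooth. unf. solveC.
  - apply PC_per. unf. solvePC.
  - apply PC_per. unf. solvePC.
Qed.

Lemma adj u v w : smooth_vf u -> smooth_vf v -> smooth_vf w ->
  int_T2 (ipf (lie u w) v) = int_T2 (ipf (adstar u v) w).
Proof.
  intros [u1 [u2 [u3 u4]]] [v1 [v2 [v3 v4]]] [w1 [w2 [w3 w4]]].
  set (P := fun x y => fst u x y * (fst v x y * fst w x y + snd v x y * snd w x y)).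
  set (Q := fun x y => snd u x y * (fst v x y * fst w x y + snd v x y * snd w x y)).
  assert (CP : CS P) by (unfold P; solveC).
  assert (CQ : CS Q) by (unfold Q; solveC).
  rewrite (int_ext _ (fun x y => ipf (adstar u v) w x y - (dx P x y + dy Q x y))).
  - rewrite int_minus, int_plus, int_dx0, int_dy0.
    all: first [ ring | assumption | (apply PC_per; unfold P, Q; solvePC) | (unf; solveC) ].
  - intros x y.
  assert (HP : dx P x y = dx (fst u) x y * (fst v x y * fst w x y + snd v x y * snd w x y)
     + fst u x y * (dx (fst v) x y * fst w x y + fst v x y * dx (fst w) x y
                  + dx (snd v) x y * snd w x y + snd v x y * dx (snd w) x y)).
  { unfold P, dx. apply is_derive_unique. auto_derive. atomd. ring. }
  assert (HQ : dy Q x y = dy (snd u) x y * (fst v x y * fst w x y + snd v x y * snd w x y)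
     + snd u x y * (dy (fst v) x y * fst w x y + fst v x y * dy (fst w) x y
                  + dy (snd v) x y * snd w x y + snd v x y * dy (snd w) x y)).
  { unfold Q, dy. apply is_derive_unique. auto_derive. atomd. ring. }
  rewrite HP, HQ. unf. ring.
Qed.

Lemma ip_ipf a u v : ip a u v = a * int_T2 (ipf u v).
Proof. reflexivity. Qed.

Lemma lie_smooth u v : smooth_vf u -> smooth_vf v -> smooth_vf (lie u v).
Proof.
  intros [u1 [u2 [u3 u4]]] [v1 [v2 [v3 v4]]].
  split; [|split; [|split]].
  - apply C_smooth. unf. solveC.
  - apply C_smooth. unf. solveC.
  - apply PC_per. unf. solvePC.
  - apply PC_per. unf. solvePC.
Qed.

Lemma CS_ipf u v : smooth_vf u -> smooth_vf v -> CS (ipf u v).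
Proof.
  intros [u1 [u2 [u3 u4]]] [v1 [v2 [v3 v4]]]. unfold ipf. solveC.
Qed.

Lemma NLC_koszul a u v w : smooth_vf u -> smooth_vf v -> smooth_vf w ->
  2 * ip a (NLC u v) w = ip a (lie u v) w - ip a (lie v w) u + ip a (lie w u) v.
Proof.
  intros Hu Hv Hw.
  pose proof (Hu) as [u1 [u2 [u3 u4]]]. pose proof (Hv) as [v1 [v2 [v3 v4]]].
  pose proof (Hw) as [w1 [w2 [w3 w4]]].
  rewrite !ip_ipf.
  assert (C1 : CS (ipf (lie u v) w)) by (apply CS_ipf; auto using lie_smooth).
  assert (C2 : CS (ipf (adstar v u) w)) by (unfold ipf; unf; solveC).
  assert (C3 : CS (ipf (adstar u v) w)) by (unfold ipf; unf; solveC).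
  assert (C4 : CS (ipf (lie u w) v)) by (apply CS_ipf; auto using lie_smooth).
  assert (e1 : int_T2 (ipf (NLC u v) w) = / 2 * (int_T2 (ipf (lie u v) w)
     - int_T2 (ipf (adstar v u) w) - int_T2 (ipf (adstar u v) w))).
  { rewrite (int_ext _ (fun x y => / 2 * ((ipf (lie u v) w x y - ipf (adstar v u) w x y)
        - ipf (adstar u v) w x y))) by (intros; unf; ring).
    rewrite int_scal, int_minus, int_minus; auto; solveC. }
  assert (e2 : int_T2 (ipf (lie w u) v) = - int_T2 (ipf (lie u w) v)).
  { rewrite (int_ext _ (fun x y => (-1) * ipf (lie u w) v x y)) by (intros; unf; ring).
    rewrite int_scal; auto. ring. }
  rewrite e1, e2, (adj v u w), (adj u v w); auto. field.
Qed.

Lemma LC_NLC a : LC_connection a NLC.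
Proof.
  intros u v Hu Hv. split.
  - apply NLC_smooth; auto.
  - intros w Hw. apply NLC_koszul; auto.
Qed.

Arguments NLC : simpl never.

Lemma ex_RInt_sub (g : R -> R) a b :
  (forall t, 0 <= t <= 1 -> continuous g t) -> 0 <= a -> a <= b -> b <= 1 -> ex_RInt g a b.
Proof.
  intros Hc H1 H2 H3. apply (ex_RInt_continuous (V := R_CompleteNormedModule)).
  intros z Hz. apply Hc. rewrite Rmin_left in Hz by lra. rewrite Rmax_right in Hz by lra. lra.
Qed.

Lemma zero1 (g : R -> R) :
  (forall t, 0 <= t <= 1 -> continuous g t) ->
  (forall t, 0 <= t <= 1 -> 0 <= g t) ->
  RInt g 0 1 = 0 -> forall t, 0 <= t <= 1 -> g t = 0.
Proof.
  intros Hc Hp Hi t0 Ht0.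
  destruct (Rle_lt_or_eq_dec 0 (g t0) (Hp t0 Ht0)) as [Hpos | Heq]; [| auto].
  exfalso.
  pose proof (Hc t0 Ht0) as H.
  assert (he : 0 < g t0 / 2) by lra.
  apply filterlim_locally with (eps := mkposreal _ he) in H.
  destruct H as [d Hd].
  assert (Hb : forall t, Rabs (t - t0) < d -> g t0 / 2 < g t).
  { intros t Ht. specialize (Hd t Ht). simpl in Hd.
    change (Rabs (g t - g t0) < g t0 / 2) in Hd.
    apply Rabs_lt_between' in Hd. lra. }
  pose proof (cond_pos d) as dpos.
  set (al := Rmax 0 (t0 - d / 2)). set (be := Rmin 1 (t0 + d / 2)).
  assert (Hal : 0 <= al /\ al <= t0 /\ t0 - d/2 <= al).
  { unfold al, Rmax. destruct Rle_dec; lra. }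
  assert (Hbe : be <= 1 /\ t0 <= be /\ be <= t0 + d/2).
  { unfold be, Rmin. destruct Rle_dec; lra. }
  assert (Hab : al < be).
  { unfold al, be, Rmax, Rmin. destruct Rle_dec; destruct Rle_dec; lra. }
  assert (E1 : RInt g 0 1 = RInt g 0 al + (RInt g al be + RInt g be 1)).
  { rewrite <- (RInt_Chasles g 0 al 1). rewrite <- (RInt_Chasles g al be 1). reflexivity.
    all: apply ex_RInt_sub; auto; lra. }
  assert (I1 : 0 <= RInt g 0 al).
  { apply RInt_ge_0. lra. apply ex_RInt_sub; auto; lra. intros; apply Hp; lra. }
  assert (I3 : 0 <= RInt g be 1).
  { apply RInt_ge_0. lra. apply ex_RInt_sub; auto; lra. intros; apply Hp; lra. }
  assert (I2 : 0 < RInt g al be).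
  { apply RInt_gt_0. lra.
    - intros t Ht. apply Rlt_trans with (g t0 / 2). lra. apply Hb.
      apply Rabs_def1; lra.
    - intros t Ht. apply Hc. lra. }
  lra.
Qed.

Lemma per_Z (f : R -> R -> R) : periodic2 f ->
  forall k : Z, (forall x y, f (x + IZR k) y = f x y) /\ (forall x y, f x (y + IZR k) = f x y).
Proof.
  intros Hp k. induction k using Z.peano_ind.
  - split; intros; rewrite Rplus_0_r; auto.
  - destruct IHk as [I1 I2]. rewrite succ_IZR. split; intros.
    + replace (x + (IZR k + 1)) with ((x + IZR k) + 1) by ring. rewrite (proj1 (Hp _ _)). auto.
    + replace (y + (IZR k + 1)) with ((y + IZR k) + 1) by ring. rewrite (proj2 (Hp _ _)). auto.
  - destruct IHk as [I1 I2]. rewrite <- Z.sub_1_r, minus_IZR. split; intros.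
    + rewrite <- (proj1 (Hp _ _)). replace (x + (IZR k - 1) + 1) with (x + IZR k) by ring. auto.
    + rewrite <- (proj2 (Hp _ _)). replace (y + (IZR k - 1) + 1) with (y + IZR k) by ring. auto.
Qed.

Lemma frac01 x : exists k : Z, 0 <= x - IZR k <= 1.
Proof.
  exists (Int_part x). pose proof (base_Int_part x). lra.
Qed.

Lemma per_ext (f : R -> R -> R) : periodic2 f ->
  (forall x y, 0 <= x <= 1 -> 0 <= y <= 1 -> f x y = 0) -> forall x y, f x y = 0.
Proof.
  intros Hp H x y.
  destruct (frac01 x) as [k Hk]. destruct (frac01 y) as [j Hj].
  destruct (per_Z f Hp k) as [A _]. destruct (per_Z f Hp j) as [_ B].
  replace x with ((x - IZR k) + IZR k) by ring. rewrite A.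
  replace y with ((y - IZR j) + IZR j) by ring. rewrite B.
  apply H; auto.
Qed.

Lemma zero2 (f g : R -> R -> R) : CS f -> CS g -> periodic2 f -> periodic2 g ->
  int_T2 (fun x y => f x y * f x y + g x y * g x y) = 0 ->
  (forall x y, f x y = 0) /\ (forall x y, g x y = 0).
Proof.
  intros Cf Cg Pf Pg Hi.
  set (h := fun x y => f x y * f x y + g x y * g x y).
  assert (Ch : CS h) by (unfold h; solveC).
  assert (hpos : forall x y, 0 <= h x y).
  { intros; unfold h. pose proof (Rle_0_sqr (f x y)). pose proof (Rle_0_sqr (g x y)).
    unfold Rsqr in *. lra. }
  assert (F0 : forall x, 0 <= x <= 1 -> RInt (fun y => h x y) 0 1 = 0).
  { apply (zero1 (fun x => RInt (fun y => h x y) 0 1)).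
    - intros; apply cont_outer; auto.
    - intros. apply RInt_ge_0. lra. apply ex_inner; auto. intros; auto.
    - exact Hi. }
  assert (H0 : forall x y, 0 <= x <= 1 -> 0 <= y <= 1 -> h x y = 0).
  { intros x y Hx Hy. apply (zero1 (fun y => h x y)); auto.
    intros; apply (cont_y h); apply C_cont; auto. }
  split; apply per_ext; auto; intros x y Hx Hy; specialize (H0 x y Hx Hy); unfold h in H0;
    pose proof (Rle_0_sqr (f x y)); pose proof (Rle_0_sqr (g x y)); unfold Rsqr in *;
    nra.
Qed.

Lemma uniq a N u v : 0 < a -> LC_connection a N -> smooth_vf u -> smooth_vf v ->
  N u v = NLC u v.
Proof.
  intros ha HN Hu Hv.
  destruct (HN u v Hu Hv) as [Hs HK].
  destruct (LC_NLC a u v Hu Hv) as [Hs0 HK0].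
  pose proof Hs as [s1 [s2 [s3 s4]]]. pose proof Hs0 as [t1 [t2 [t3 t4]]].
  set (d := (fun x y => fst (N u v) x y - fst (NLC u v) x y,
             fun x y => snd (N u v) x y - snd (NLC u v) x y) : VF).
  assert (Hd : smooth_vf d).
  { unfold d; split; [|split; [|split]]; cbn [fst snd].
    - apply C_smooth; solveC.
    - apply C_smooth; solveC.
    - apply PC_per; solvePC.
    - apply PC_per; solvePC. }
  specialize (HK d Hd). specialize (HK0 d Hd).
  assert (E : ip a (N u v) d - ip a (NLC u v) d = 0) by lra.
  rewrite !ip_ipf in E.
  assert (E2 : int_T2 (ipf d d) = 0).
  { rewrite (int_ext _ (fun x y => ipf (N u v) d x y - ipf (NLC u v) d x y)).
    rewrite int_minus. apply (Rmult_eq_reg_l a). lra. lra.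
    all: try (apply CS_ipf; auto).
    intros x y. unfold ipf, d. simpl. ring. }
  unfold ipf, d in E2. cbn [fst snd] in E2.
  set (f1 := fun x y => fst (N u v) x y - fst (NLC u v) x y).
  set (f2 := fun x y => snd (N u v) x y - snd (NLC u v) x y).
  assert (Cf1 : CS f1) by (unfold f1; solveC).
  assert (Cf2 : CS f2) by (unfold f2; solveC).
  assert (Pf1 : periodic2 f1) by (apply PC_per; unfold f1; solvePC).
  assert (Pf2 : periodic2 f2) by (apply PC_per; unfold f2; solvePC).
  destruct (zero2 f1 f2 Cf1 Cf2 Pf1 Pf2 E2) as [Z1 Z2].
  unfold f1, f2 in *.
  rewrite (surjective_pairing (N u v)), (surjective_pairing (NLC u v)).
  f_equal; extensionality x; extensionality y.
  - specialize (Z1 x y). lra.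
  - specialize (Z2 x y). lra.
Qed.

Lemma smooth2_const c : smooth2 (fun _ _ => c).
Proof. apply C_smooth. apply CSconst. Qed.

Lemma smooth1_lift : forall F, smooth1 F -> smooth2 (fun x (_ : R) => F x).
Proof.
  cofix CIH. intros F H. destruct H as [Hd Hs]. constructor.
  - intros x y. apply (continuous_comp fst F (x, y)).
    + apply continuous_fst.
    + simpl. apply (ex_derive_continuous (K := R_AbsRing) (V := R_NormedModule)). apply Hd.
  - intros x y. apply Hd.
  - intros x y. apply ex_derive_const.
  - change (smooth2 (fun x (_ : R) => Derive F x)). apply CIH. exact Hs.
  - replace (dy (fun x (_ : R) => F x)) with (fun _ _ : R => 0).
    + apply smooth2_const.
    + unfold dy. extensionality x; extensionality y. rewrite Derive_const. reflexivity.
Qed.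

Lemma smooth1_lift_y : forall F, smooth1 F -> smooth2 (fun (_ : R) (y : R) => F y).
Proof.
  cofix CIH. intros F H. destruct H as [Hd Hs]. constructor.
  - intros x y. apply (continuous_comp snd F (x, y)).
    + apply continuous_snd.
    + simpl. apply (ex_derive_continuous (K := R_AbsRing) (V := R_NormedModule)). apply Hd.
  - intros x y. apply ex_derive_const.
  - intros x y. apply Hd.
  - replace (dx (fun (_ : R) y => F y)) with (fun _ _ : R => 0).
    + apply smooth2_const.
    + unfold dx. extensionality x; extensionality y. rewrite Derive_const. reflexivity.
  - change (smooth2 (fun (_ : R) y => Derive F y)). apply CIH. exact Hs.
Qed.

Lemma along_x_smooth f : smooth1 f -> (forall x, f (x + 1) = f x) -> smooth_vf (along_x f).
Proof.
  intros H P. split; [|split; [|split]]; simpl.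
  - apply smooth1_lift; auto.
  - apply smooth2_const.
  - intros x y; split; auto.
  - intros x y; split; auto.
Qed.

Lemma along_y_smooth f : smooth1 f -> (forall x, f (x + 1) = f x) -> smooth_vf (along_y f).
Proof.
  intros H P. split; [|split; [|split]]; simpl.
  - apply smooth2_const.
  - apply smooth1_lift; auto.
  - intros x y; split; auto.
  - intros x y; split; auto.
Qed.

Ltac etaD := repeat match goal with |- context [Derive (fun t => ?F t)] =>
  change (Derive (fun t => F t)) with (Derive F) end.

Ltac redtac := unfold NLC, lie, adstar, vf_opp, vf_bracket, vf_apply, along_x, along_y; simpl;
  f_equal; extensionality x; extensionality y; unfold dx, dy; rewrite ?Derive_const; etaD; field.

Lemma lie_XX F G : lie (along_x F) (along_x G) = along_x (fun x => G x * Derive F x - F x * Derive G x).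
Proof. redtac. Qed.
Lemma lie_XY F G : lie (along_x F) (along_y G) = along_y (fun x => - (F x * Derive G x)).
Proof. redtac. Qed.
Lemma NLC_XX F G : NLC (along_x F) (along_x G) = along_x (fun x => -2 * F x * Derive G x - G x * Derive F x).
Proof. redtac. Qed.
Lemma NLC_XY F G : NLC (along_x F) (along_y G) = along_y (fun x => - (F x * Derive G x) - / 2 * (Derive F x * G x)).
Proof. redtac. Qed.
Lemma NLC_YY F G : NLC (along_y F) (along_y G) = along_x (fun x => - / 2 * (F x * Derive G x + G x * Derive F x)).
Proof. redtac. Qed.
Lemma sub_XX A B : vf_sub (along_x A) (along_x B) = along_x (fun x => A x - B x).
Proof. unfold vf_sub, vf_add, vf_opp, along_x; simpl. f_equal; extensionality x; extensionality y; ring. Qed.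

Lemma ip_XX a A F : ip a (along_x A) (along_x F) = a * RInt (fun x => A x * F x) 0 1.
Proof.
  unfold ip, int_T2, along_x; simpl. f_equal. apply RInt_ext. intros x _.
  rewrite RInt_const. unfold scal; simpl; unfold mult; simpl. ring.
Qed.

Lemma smooth1_3 f : smooth1 f ->
  (forall x, ex_derive f x) /\ (forall x, ex_derive (Derive f) x) /\ (forall x, ex_derive (Derive (Derive f)) x).
Proof.
  intros [H0 [H1 [H2 _]]]. auto.
Qed.

Ltac atom1 := repeat (match goal with |- _ /\ _ => split | |- True => exact I end || auto).

Ltac expandD := repeat (etaD; match goal with
 | |- context [Derive ?F ?x] => lazymatch F with
     | (fun t => ?G t) => fail
     | (fun _ => _) => erewrite (is_derive_unique F x); [ | auto_derive; atom1; try reflexivity ]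
     end
 end); etaD.

Lemma int_const_y T : int_T2 (fun x _ => T x) = RInt T 0 1.
Proof.
  unfold int_T2. apply RInt_ext. intros x _.
  rewrite RInt_const. unfold scal; simpl; unfold mult; simpl. ring.
Qed.

Lemma Derive_per f : (forall x, f (x + 1) = f x) -> forall x, Derive f (x + 1) = Derive f x.
Proof.
  intros H x. rewrite Derive_shift. f_equal. extensionality t. auto.
Qed.

Lemma part1 a N f g : 0 < a -> LC_connection a N -> smooth1 f -> smooth1 g ->
  (forall x, f (x + 1) = f x) -> (forall x, g (x + 1) = g x) ->
  S a N (along_x f) (along_x g) =
     a * RInt (fun x => (f x * Derive g x - g x * Derive f x) ^ 2) 0 1.
Proof.
  intros ha HN sf sg pf pg.
  assert (Hu := along_x_smooth f sf pf). assert (Hv := along_x_smooth g sg pg).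
  destruct (smooth1_3 f sf) as [f0 [f1 f2]]. destruct (smooth1_3 g sg) as [g0 [g1 g2]].
  unfold S, curv.
  rewrite (uniq a N (along_x g) (along_x g)), (uniq a N (along_x f) (along_x g)) by auto.
  rewrite (uniq a N (along_x f) (NLC (along_x g) (along_x g))) by auto using NLC_smooth.
  rewrite (uniq a N (along_x g) (NLC (along_x f) (along_x g))) by auto using NLC_smooth.
  rewrite (uniq a N (lie (along_x f) (along_x g)) (along_x g)) by auto using lie_smooth.
  rewrite lie_XX, !NLC_XX, !sub_XX, ip_XX. f_equal.
  set (P := fun x => f x ^ 2 * g x * Derive g x - g x ^ 2 * f x * Derive f x).
  set (DP := fun x => 2 * f x * Derive f x * g x * Derive g x + f x ^ 2 * Derive g x ^ 2
     + f x ^ 2 * g x * Derive (Derive g) x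
     - (2 * g x * Derive g x * f x * Derive f x + g x ^ 2 * Derive f x ^ 2
        + g x ^ 2 * f x * Derive (Derive f) x)).
  assert (HP : forall x, is_derive P x (DP x)).
  { intros x. unfold P, DP. auto_derive. atom1. etaD. ring. }
  set (T := fun x => (f x * Derive g x - g x * Derive f x) ^ 2).
  assert (cT : forall x, continuous T x).
  { intros x. apply (ex_derive_continuous (K := R_AbsRing) (V := R_NormedModule)). unfold T. auto_derive. atom1. }
  assert (cDP : forall x, continuous DP x).
  { intros x. apply (ex_derive_continuous (K := R_AbsRing) (V := R_NormedModule)). unfold DP. auto_derive. atom1. }
  rewrite (RInt_ext _ (fun x => T x + DP x)).
  - rewrite (RInt_plus (V := R_CompleteNormedModule) T DP).
    + rewrite (RInt_ext DP (Derive P)).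
      * rewrite RInt_Derive.
        -- assert (P1 : P (0 + 1) = P 0).
           { unfold P. rewrite pf, pg, (Derive_per f pf), (Derive_per g pg). reflexivity. }
           rewrite Rplus_0_l in P1.
           transitivity (RInt T 0 1 + (P 1 - P 0)). reflexivity.
           rewrite P1, (Rminus_diag_eq (P 0) (P 0) eq_refl), Rplus_0_r. reflexivity.
        -- intros; eexists; apply HP.
        -- intros x _. apply (continuous_ext DP). intros; symmetry; apply is_derive_unique; apply HP. apply cDP.
      * intros x _. symmetry. apply is_derive_unique. apply HP.
    + apply (ex_RInt_continuous (V := R_CompleteNormedModule)); auto.
    + apply (ex_RInt_continuous (V := R_CompleteNormedModule)); auto.
  - intros x _. unfold T, DP. expandD. match goal with |- @eq _ ?a ?b => change (@eq R a b) end. ring.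
Qed.

Lemma part2_gen a N f q : 0 < a -> LC_connection a N -> smooth1 f -> smooth1 q ->
  (forall x, f (x + 1) = f x) -> (forall x, q (x + 1) = q x) ->
  S a N (along_x f) (along_y q) =
     a * RInt (fun x => f x ^ 2 * Derive q x ^ 2 + f x ^ 2 * q x * Derive (Derive q) x
        - / 4 * f x * Derive (Derive f) x * q x ^ 2 - / 2 * f x * Derive f x * q x * Derive q x) 0 1.
Proof.
  intros ha HN sf sq pf pq.
  assert (Hu := along_x_smooth f sf pf). assert (Hv := along_y_smooth q sq pq).
  destruct (smooth1_3 f sf) as [f0 [f1 f2]]. destruct (smooth1_3 q sq) as [q0 [q1 q2]].
  unfold S, curv.
  rewrite (uniq a N (along_y q) (along_y q)), (uniq a N (along_x f) (along_y q)) by auto.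
  rewrite (uniq a N (along_x f) (NLC (along_y q) (along_y q))) by auto using NLC_smooth.
  rewrite (uniq a N (along_y q) (NLC (along_x f) (along_y q))) by auto using NLC_smooth.
  rewrite (uniq a N (lie (along_x f) (along_y q)) (along_y q)) by auto using lie_smooth.
  rewrite lie_XY, NLC_YY, NLC_XY, NLC_XX, !NLC_YY, !sub_XX, ip_XX. f_equal.
  apply RInt_ext. intros x _. expandD.
  match goal with |- @eq _ ?a ?b => change (@eq R a b) end. field.
Qed.

Lemma smooth_trig : forall k A B C, smooth1 (fun x => C + A * sin (k * x) + B * cos (k * x)).
Proof.
  cofix CIH. intros k A B C. constructor.
  - intros x. auto_derive. exact I.
  - replace (Derive (fun x => C + A * sin (k * x) + B * cos (k * x)))
      with (fun x => 0 + (- (B * k)) * sin (k * x) + (A * k) * cos (k * x)).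
    + apply CIH.
    + extensionality x. symmetry. apply is_derive_unique. auto_derive. exact I. ring.
Qed.

Lemma smooth_s : smooth1 (fun x => sin (2 * PI * x)).
Proof.
  replace (fun x => sin (2 * PI * x)) with (fun x => 0 + 1 * sin ((2 * PI) * x) + 0 * cos ((2 * PI) * x)).
  apply smooth_trig. extensionality x. ring.
Qed.

Lemma smooth_q : smooth1 (fun x => sin (2 * PI * x) ^ 2).
Proof.
  replace (fun x => sin (2 * PI * x) ^ 2) with (fun x => / 2 + 0 * sin ((4 * PI) * x) + (- / 2) * cos ((4 * PI) * x)).
  apply smooth_trig. extensionality x.
  replace (4 * PI * x) with (2 * (2 * PI * x)) by ring. rewrite cos_2a_sin. field.
Qed.

Lemma sin_per x : sin (2 * PI * (x + 1)) = sin (2 * PI * x).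
Proof.
  replace (2 * PI * (x + 1)) with (2 * PI * x + 2 * PI) by ring.
  rewrite sin_plus, sin_2PI, cos_2PI. ring.
Qed.

Lemma part2 a N : 0 < a -> LC_connection a N ->
  S a N (along_x (fun x => sin (2 * PI * x)))
        (along_y (fun x => (sin (2 * PI * x)) ^ 2)) < 0.
Proof.
  intros ha HN.
  rewrite part2_gen; auto using smooth_s, smooth_q.
  2: intros; apply sin_per.
  2: intros; rewrite sin_per; reflexivity.
  assert (Ds : Derive (fun x => sin (2 * PI * x)) = (fun x => 2 * PI * cos (2 * PI * x))).
  { extensionality x. apply is_derive_unique. auto_derive. exact I. ring. }
  assert (Dq : Derive (fun x => sin (2 * PI * x) ^ 2) = (fun x => 4 * PI * sin (2 * PI * x) * cos (2 * PI * x))).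
  { extensionality x. apply is_derive_unique. auto_derive. exact I. ring. }
  rewrite Ds, Dq.
  set (k := 2 * PI).
  set (h := fun x => sin (k * x) ^ 4 * cos (k * x) ^ 2).
  set (P := fun x => 7 / 4 * k * sin (k * x) ^ 5 * cos (k * x)).
  set (DP := fun x => 7 / 4 * k * (5 * k * sin (k * x) ^ 4 * cos (k * x) ^ 2 - k * sin (k * x) ^ 6)).
  assert (HP : forall x, is_derive P x (DP x)).
  { intros x. unfold P, DP. auto_derive. exact I. ring. }
  assert (ch : forall x, continuous h x).
  { intros x. apply (ex_derive_continuous (K := R_AbsRing) (V := R_NormedModule)). unfold h. auto_derive. exact I. }
  assert (cDP : forall x, continuous DP x).
  { intros x. apply (ex_derive_continuous (K := R_AbsRing) (V := R_NormedModule)). unfold DP. auto_derive. exact I. }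
  rewrite (RInt_ext _ (fun x => (- (15 / 4) * k ^ 2) * h x + DP x)).
  2: { intros x _. expandD. unfold h, DP.
       match goal with |- @eq _ ?a ?b => change (@eq R a b) end. unfold k. field. }
  rewrite (RInt_plus (V := R_CompleteNormedModule) (fun x => (- (15 / 4) * k ^ 2) * h x) DP).
  2: { apply (ex_RInt_continuous (V := R_CompleteNormedModule)). intros.
       apply (continuous_scal_r (K := R_AbsRing) (V := R_NormedModule) (- (15 / 4) * k ^ 2) h). auto. }
  2: { apply (ex_RInt_continuous (V := R_CompleteNormedModule)); auto. }
  assert (I2 : RInt DP 0 1 = 0).
  { rewrite (RInt_ext DP (Derive P)).
    - rewrite RInt_Derive.
      + unfold P. replace (k * 1) with (2 * PI) by (unfold k; ring). rewrite Rmult_0_r, sin_2PI, sin_0.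
        change (7 / 4 * k * 0 ^ 5 * cos (2 * PI) - 7 / 4 * k * 0 ^ 5 * cos 0 = 0). ring.
      + intros; eexists; apply HP.
      + intros x _. apply (continuous_ext DP). intros; symmetry; apply is_derive_unique; apply HP. apply cDP.
    - intros x _. symmetry. apply is_derive_unique. apply HP. }
  assert (Esc : RInt (fun x => (- (15 / 4) * k ^ 2) * h x) 0 1 = (- (15 / 4) * k ^ 2) * RInt h 0 1).
  { apply (RInt_scal (V := R_CompleteNormedModule)).
    apply (ex_RInt_continuous (V := R_CompleteNormedModule)); auto. }
  rewrite Esc.
  rewrite I2.
  assert (hpos : forall x, 0 <= h x).
  { intros x. unfold h. replace (sin (k * x) ^ 4 * cos (k * x) ^ 2) with ((sin (k * x) ^ 2 * cos (k * x)) ^ 2) by ring.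
    apply pow2_ge_0. }
  assert (Ih : 0 < RInt h 0 1).
  { assert (H0 : 0 <= RInt h 0 1).
    { apply RInt_ge_0. lra. apply (ex_RInt_continuous (V := R_CompleteNormedModule)); auto. auto. }
    destruct (Rle_lt_or_eq_dec _ _ H0) as [H1 | H1]; auto. exfalso.
    assert (Z := zero1 h (fun t _ => ch t) (fun t _ => hpos t) (eq_sym H1) (1 / 8)).
    assert (E : k * (1 / 8) = PI / 4) by (unfold k; field).
    unfold h in Z. rewrite E, sin_PI4, cos_PI4 in Z.
    assert (s2 : 0 < 1 / sqrt 2).
    { apply Rdiv_lt_0_compat. lra. apply sqrt_lt_R0. lra. }
    assert (Z' : (1 / sqrt 2) ^ 4 * (1 / sqrt 2) ^ 2 = 0) by (apply Z; lra).
    assert (0 < (1 / sqrt 2) ^ 4 * (1 / sqrt 2) ^ 2) by (apply Rmult_lt_0_compat; apply pow_lt; auto).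
    lra. }
  assert (kpos : 0 < k) by (unfold k; pose proof PI_RGT_0; lra).
  unfold scal; simpl; unfold mult; simpl. unfold plus; simpl.
  assert (0 < k ^ 2 * RInt h 0 1) by (apply Rmult_lt_0_compat; auto; apply pow_lt; auto).
  nra.
Qed.

Theorem proposition7p2 (a : R) (ha : 0 < a) :
  (exists N : VF -> VF -> VF, LC_connection a N) /\
  (forall N : VF -> VF -> VF, LC_connection a N ->
     (forall f g : R -> R,
        smooth1 f -> smooth1 g ->
        (forall x, f (x + 1) = f x) -> (forall x, g (x + 1) = g x) ->
        S a N (along_x f) (along_x g) =
          a * int_T2 (fun x _ => (f x * Derive g x - g x * Derive f x) ^ 2)
        /\ 0 <= S a N (along_x f) (along_x g)) /\
     S a N (along_x (fun x => sin (2 * PI * x)))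
           (along_y (fun x => (sin (2 * PI * x)) ^ 2)) < 0).
Proof.
  split.
  - exists NLC. apply LC_NLC.
  - intros N HN. split.
    + intros f g sf sg pf pg.
      rewrite (part1 a N f g ha HN sf sg pf pg).
      rewrite (int_const_y (fun x => (f x * Derive g x - g x * Derive f x) ^ 2)).
      split; [reflexivity|].
      destruct (smooth1_3 f sf) as [f0 [f1 f2]]. destruct (smooth1_3 g sg) as [g0 [g1 g2]].
      apply Rmult_le_pos; [lra|].
      apply RInt_ge_0; [lra| |].
      * apply (ex_RInt_continuous (V := R_CompleteNormedModule)). intros z _.
        apply (ex_derive_continuous (K := R_AbsRing) (V := R_NormedModule)). auto_derive. atom1.
      * intros; apply pow2_ge_0.
    + apply part2; auto.
Qed.
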